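(* Let $S$ be a round two-sphere in $\mathbb{HP}^1$ and $Q^2_S=\mathbb{P}(\{[S],[Sj]\}^{\perp})\cap Q^4$, where $[S],[Sj]$ are homogeneous representatives of the points of $Q^4$ corresponding to the two conformal structures on $S$. Then the real structure $j$ of $Q^4$ restricts to a real structure $\{j,Q^2_S\}$, and the two-sphere $S$, as a subset of $S^4\subset Q^4$, is exactly the real set of $\{j,Q^2_S\}$, namely the points $[a\wedge aj]$ with $[a]$ on the twistor lift $S\subset\mathbb{CP}^3$.
   Context: $\mathbb{H}^2$ (right $\mathbb{H}$-vector space) is identified with $\mathbb{C}^4$ by restricting scalars to $\mathbb{C}=\mathrm{span}_{\mathbb{R}}\{1,i\}$; right multiplication by $j$ is $\mathbb{C}$-antilinear. $\mathbb{CP}^3=\mathbb{P}(\mathbb{C}^4)$, $\mathbb{HP}^1=\{v\mathbb{H}\}\cong S^4$. $Q^4=\{[\alpha]\in\mathbb{P}(\Lambda^2\mathbb{C}^4):\alpha\wedge\alpha=0\}$, $[v\wedge w]$ corresponding to the projective line through $[v],[w]$; $\perp$ is with respect to $(\alpha,\beta)\mapsto\alpha\wedge\beta\in\Lambda^4\mathbb{C}^4\cong\mathbb{C}$. The antilinear extension of $v\wedge w\mapsto vj\wedge wj$ induces a real structure (antiholomorphic involution) $j$ of $Q^4$ whose fixed points are the twistor fibres $[v\wedge vj]$; $v\mathbb{H}\mapsto[v\wedge vj]$ identifies $S^4$ with this real set. A round two-sphere with conformal structure is $\{l:Tl=l\}$ for some $T\in\mathrm{End}_{\mathbb{H}}(\mathbb{H}^2)$,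 $T^2=-1$; its twistor lift is the line $S=\mathbb{P}\{v:Tv=vi\}\subset\mathbb{CP}^3$, and $Sj$ is the lift with the opposite conformal structure. The real set of a real structure is its fixed point set. *)

(* Defs.v *)
From mathcomp Require Import all_boot all_order all_algebra.
Set Implicit Arguments. Unset Strict Implicit. Unset Printing Implicit Defensive.
Import GRing.Theory Num.Theory.
Local Open Scope ring_scope.

(* Conventions:
   H^2 ~ C^4 = 'cV[C]_4 : a quaternion q = z + j w (z,w in C) has C-coordinates
   (z,w); right multiplication by complex scalars is scalar multiplication, and
   right multiplication by j is  (z1,w1,z2,w2) |-> (-conj w1, conj z1, -conj w2, conj z2),
   i.e. Jvec v = Mj *m (conj v). *)

Definition Mj (C : numClosedFieldType) : 'M[C]_4 :=
  \matrix_(i < 4, k < 4)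
    (if (val i == 0%N) && (val k == 1%N) then -1
     else if (val i == 1%N) && (val k == 0%N) then 1
     else if (val i == 2%N) && (val k == 3%N) then -1
     else if (val i == 3%N) && (val k == 2%N) then 1
     else 0).

Definition Jvec (C : numClosedFieldType) (v : 'cV[C]_4) : 'cV[C]_4 :=
  Mj C *m map_mx Num.conj v.

(* The quaternionic line v H = span_C {v, v j} (v <> 0 gives a point of HP^1) *)
Definition inH (C : numClosedFieldType) (v u : 'cV[C]_4) : Prop :=
  exists z w : C, u = z *: v + w *: Jvec v.

(* T l = l for the quaternionic line l = v H *)
Definition fixes_hline (C : numClosedFieldType) (T : 'M[C]_4) (v : 'cV[C]_4) : Prop :=
  forall u, inH v u <-> exists u0, inH v u0 /\ u = T *m u0.

(* Lambda^2 C^4 = 'cV[C]_6 with basis e01,e02,e03,e12,e13,e23 *)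
Definition pr (i : 'I_6) : 'I_4 * 'I_4 :=
  match val i with
  | 0%N => (inord 0, inord 1)
  | 1%N => (inord 0, inord 2)
  | 2%N => (inord 0, inord 3)
  | 3%N => (inord 1, inord 2)
  | 4%N => (inord 1, inord 3)
  | _ => (inord 2, inord 3)
  end.

Definition wedge (C : numClosedFieldType) (v w : 'cV[C]_4) : 'cV[C]_6 :=
  \col_(i < 6) (v (pr i).1 0 * w (pr i).2 0 - v (pr i).2 0 * w (pr i).1 0).

(* alpha /\ beta in Lambda^4 C^4 = C (coefficient of e0/\e1/\e2/\e3) *)
Definition wedge4 (C : numClosedFieldType) (a b : 'cV[C]_6) : C :=
  let c (x : 'cV[C]_6) (k : nat) := x (inord k) 0 in
  c a 0 * c b 5 - c a 1 * c b 4 + c a 2 * c b 3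
  + c a 3 * c b 2 - c a 4 * c b 1 + c a 5 * c b 0.

(* antilinear extension of v/\w |-> vj /\ wj:  (Lambda^2 Mj) applied to conj alpha *)
Definition jL (C : numClosedFieldType) (a : 'cV[C]_6) : 'cV[C]_6 :=
  \col_(i < 6) \sum_(m < 6)
     (Mj C (pr i).1 (pr m).1 * Mj C (pr i).2 (pr m).2
      - Mj C (pr i).1 (pr m).2 * Mj C (pr i).2 (pr m).1) * (a m 0)^*.

Definition proj_eq (C : numClosedFieldType) (n : nat) (a b : 'cV[C]_n) : Prop :=
  exists c : C, c != 0 /\ b = c *: a.

(* [alpha] in Q^2_S = P({[S],[Sj]}^perp) /\ Q^4 *)
Definition inQ2S (C : numClosedFieldType) (A B : 'cV[C]_6) (a : 'cV[C]_6) : Prop :=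
  a != 0 /\ wedge4 a a = 0 /\ wedge4 a A = 0 /\ wedge4 a B = 0.

(* Main.v *)
Require Import Defs.
From mathcomp Require Import all_boot all_order all_algebra ring.
Import GRing.Theory Num.Theory.
Local Open Scope ring_scope.
Section S.
Variable C : numClosedFieldType.

Lemma n6 : (lift ord0 (lift ord0 (lift ord0 (lift ord0 (lift ord0 ord0)))) = inord 5 :> 'I_6) /\
  (lift ord0 (lift ord0 (lift ord0 (lift ord0 ord0))) = inord 4 :> 'I_6) /\
  (lift ord0 (lift ord0 (lift ord0 ord0)) = inord 3 :> 'I_6) /\
  (lift ord0 (lift ord0 ord0) = inord 2 :> 'I_6) /\
  (lift ord0 ord0 = inord 1 :> 'I_6) /\ (ord0 = inord 0 :> 'I_6).
Proof. by do !split; apply/val_inj; rewrite /= inordK. Qed.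
Lemma n4 : 
  (lift ord0 (lift ord0 (lift ord0 ord0)) = inord 3 :> 'I_4) /\
  (lift ord0 (lift ord0 ord0) = inord 2 :> 'I_4) /\
  (lift ord0 ord0 = inord 1 :> 'I_4) /\ (ord0 = inord 0 :> 'I_4).
Proof. by do !split; apply/val_inj; rewrite /= inordK. Qed.

Lemma cV6P (u v : 'cV[C]_6) : u (inord 0) 0 = v (inord 0) 0 -> u (inord 1) 0 = v (inord 1) 0 ->
  u (inord 2) 0 = v (inord 2) 0 -> u (inord 3) 0 = v (inord 3) 0 ->
  u (inord 4) 0 = v (inord 4) 0 -> u (inord 5) 0 = v (inord 5) 0 -> u = v.
Proof.
move=> h0 h1 h2 h3 h4 h5; apply/matrixP => i j; rewrite (ord1 j).
have -> : i = inord i by rewrite inord_val.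
by case: i => [[|[|[|[|[|[|//]]]]]] ?].
Qed.
Lemma cV4P (u v : 'cV[C]_4) : u (inord 0) 0 = v (inord 0) 0 -> u (inord 1) 0 = v (inord 1) 0 ->
  u (inord 2) 0 = v (inord 2) 0 -> u (inord 3) 0 = v (inord 3) 0 -> u = v.
Proof.
move=> h0 h1 h2 h3; apply/matrixP => i j; rewrite (ord1 j).
have -> : i = inord i by rewrite inord_val.
by case: i => [[|[|[|[|//]]]] ?].
Qed.

Lemma wE0 (v w : 'cV[C]_4) : wedge v w (inord 0) 0 = v (inord 0) 0 * w (inord 1) 0 - v (inord 1) 0 * w (inord 0) 0.
Proof. by rewrite /wedge mxE /pr /= ?inordK. Qed.
Lemma wE1 (v w : 'cV[C]_4) : wedge v w (inord 1) 0 = v (inord 0) 0 * w (inord 2) 0 - v (inord 2) 0 * w (inord 0) 0.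
Proof. by rewrite /wedge mxE /pr /= ?inordK. Qed.
Lemma wE2 (v w : 'cV[C]_4) : wedge v w (inord 2) 0 = v (inord 0) 0 * w (inord 3) 0 - v (inord 3) 0 * w (inord 0) 0.
Proof. by rewrite /wedge mxE /pr /= ?inordK. Qed.
Lemma wE3 (v w : 'cV[C]_4) : wedge v w (inord 3) 0 = v (inord 1) 0 * w (inord 2) 0 - v (inord 2) 0 * w (inord 1) 0.
Proof. by rewrite /wedge mxE /pr /= ?inordK. Qed.
Lemma wE4 (v w : 'cV[C]_4) : wedge v w (inord 4) 0 = v (inord 1) 0 * w (inord 3) 0 - v (inord 3) 0 * w (inord 1) 0.
Proof. by rewrite /wedge mxE /pr /= ?inordK. Qed.
Lemma wE5 (v w : 'cV[C]_4) : wedge v w (inord 5) 0 = v (inord 2) 0 * w (inord 3) 0 - v (inord 3) 0 * w (inord 2) 0.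
Proof. by rewrite /wedge mxE /pr /= ?inordK. Qed.
Lemma JE0 (v : 'cV[C]_4) : Jvec v (inord 0) 0 = - (v (inord 1) 0) ^*.
Proof. rewrite /Jvec mxE !big_ord_recl big_ord0 /Mj !mxE /= ?inordK //=; case: n4 => e3 [e2 [e1 e0]]; rewrite e3 e2 e1 e0; ring. Qed.
Lemma JE1 (v : 'cV[C]_4) : Jvec v (inord 1) 0 = (v (inord 0) 0)^*.
Proof. rewrite /Jvec mxE !big_ord_recl big_ord0 /Mj !mxE /= ?inordK //=; case: n4 => e3 [e2 [e1 e0]]; rewrite e3 e2 e1 e0; ring. Qed.
Lemma JE2 (v : 'cV[C]_4) : Jvec v (inord 2) 0 = - (v (inord 3) 0) ^*.
Proof. rewrite /Jvec mxE !big_ord_recl big_ord0 /Mj !mxE /= ?inordK //=; case: n4 => e3 [e2 [e1 e0]]; rewrite e3 e2 e1 e0; ring. Qed.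
Lemma JE3 (v : 'cV[C]_4) : Jvec v (inord 3) 0 = (v (inord 2) 0)^*.
Proof. rewrite /Jvec mxE !big_ord_recl big_ord0 /Mj !mxE /= ?inordK //=; case: n4 => e3 [e2 [e1 e0]]; rewrite e3 e2 e1 e0; ring. Qed.
Lemma LE0 (a : 'cV[C]_6) : jL a (inord 0) 0 = (a (inord 0) 0)^*.
Proof. rewrite /jL mxE !big_ord_recl big_ord0 /Mj !mxE /pr /= !inordK //=; case: n6 => e5 [e4 [e3 [e2 [e1 e0]]]]; rewrite e5 e4 e3 e2 e1 e0; ring. Qed.
Lemma LE1 (a : 'cV[C]_6) : jL a (inord 1) 0 = (a (inord 4) 0)^*.
Proof. rewrite /jL mxE !big_ord_recl big_ord0 /Mj !mxE /pr /= !inordK //=; case: n6 => e5 [e4 [e3 [e2 [e1 e0]]]]; rewrite e5 e4 e3 e2 e1 e0; ring. Qed.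
Lemma LE2 (a : 'cV[C]_6) : jL a (inord 2) 0 = - (a (inord 3) 0)^*.
Proof. rewrite /jL mxE !big_ord_recl big_ord0 /Mj !mxE /pr /= !inordK //=; case: n6 => e5 [e4 [e3 [e2 [e1 e0]]]]; rewrite e5 e4 e3 e2 e1 e0; ring. Qed.
Lemma LE3 (a : 'cV[C]_6) : jL a (inord 3) 0 = - (a (inord 2) 0)^*.
Proof. rewrite /jL mxE !big_ord_recl big_ord0 /Mj !mxE /pr /= !inordK //=; case: n6 => e5 [e4 [e3 [e2 [e1 e0]]]]; rewrite e5 e4 e3 e2 e1 e0; ring. Qed.
Lemma LE4 (a : 'cV[C]_6) : jL a (inord 4) 0 = (a (inord 1) 0)^*.
Proof. rewrite /jL mxE !big_ord_recl big_ord0 /Mj !mxE /pr /= !inordK //=; case: n6 => e5 [e4 [e3 [e2 [e1 e0]]]]; rewrite e5 e4 e3 e2 e1 e0; ring. Qed.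
Lemma LE5 (a : 'cV[C]_6) : jL a (inord 5) 0 = (a (inord 5) 0)^*.
Proof. rewrite /jL mxE !big_ord_recl big_ord0 /Mj !mxE /pr /= !inordK //=; case: n6 => e5 [e4 [e3 [e2 [e1 e0]]]]; rewrite e5 e4 e3 e2 e1 e0; ring. Qed.


Lemma addE m n (u v : 'M[C]_(m,n)) i j : (u + v) i j = u i j + v i j.
Proof. by rewrite mxE. Qed.
Lemma oppE m n (u : 'M[C]_(m,n)) i j : (- u) i j = - u i j.
Proof. by rewrite mxE. Qed.
Lemma scaleE m n (x : C) (u : 'M[C]_(m,n)) i j : (x *: u) i j = x * u i j.
Proof. by rewrite mxE. Qed.
Lemma zeroE m n i j : (0 : 'M[C]_(m,n)) i j = 0.
Proof. by rewrite mxE. Qed.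

Lemma cD (x y : C) : (x + y)^* = x^* + y^*. Proof. exact: rmorphD. Qed.
Lemma cB (x y : C) : (x - y)^* = x^* - y^*. Proof. exact: rmorphB. Qed.
Lemma cN (x : C) : (- x)^* = - x^*. Proof. exact: rmorphN. Qed.
Lemma cM (x y : C) : (x * y)^* = x^* * y^*. Proof. exact: rmorphM. Qed.
Lemma c0 : (0 : C)^* = 0. Proof. exact: rmorph0. Qed.
Lemma c1 : (1 : C)^* = 1. Proof. exact: rmorph1. Qed.
End S.
Ltac crunch := rewrite ?(addE, oppE, scaleE, zeroE, wE0, wE1, wE2, wE3, wE4, wE5,
   JE0, JE1, JE2, JE3, LE0, LE1, LE2, LE3, LE4, LE5) /wedge4 ?(addE, oppE, scaleE, zeroE, wE0, wE1, wE2, wE3, wE4, wE5,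
   JE0, JE1, JE2, JE3, LE0, LE1, LE2, LE3, LE4, LE5);
  rewrite ?(cB, cD, cN, cM, conjCK, c0, c1).
Ltac v6 := apply: cV6P; crunch.
Ltac v4 := apply: cV4P; crunch.

Section S2.
Variable C : numClosedFieldType.
Lemma jL_wedge (v w : 'cV[C]_4) : jL (wedge v w) = wedge (Jvec v) (Jvec w).
Proof. by v6; ring. Qed.
Lemma JJ (v : 'cV[C]_4) : Jvec (Jvec v) = - v.
Proof. by v4; ring. Qed.
Lemma jLjL (x : 'cV[C]_6) : jL (jL x) = x.
Proof. by v6; ring. Qed.
Lemma w4jL (x y : 'cV[C]_6) : wedge4 (jL x) (jL y) = (wedge4 x y)^*.
Proof. by crunch; ring. Qed.
Lemma jLZ (c : C) (x : 'cV[C]_6) : jL (c *: x) = c^* *: jL x.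
Proof. by v6; ring. Qed.
Lemma JvecZ (c : C) (x : 'cV[C]_4) : Jvec (c *: x) = c^* *: Jvec x.
Proof. by v4; ring. Qed.
Lemma JvecD (x y : 'cV[C]_4) : Jvec (x + y) = Jvec x + Jvec y.
Proof. by v4; ring. Qed.
Lemma w4Z (c : C) (x y : 'cV[C]_6) : wedge4 (c *: x) y = c * wedge4 x y.
Proof. by crunch; ring. Qed.
Lemma w4self (v w : 'cV[C]_4) : wedge4 (wedge v w) (wedge v w) = 0.
Proof. by crunch; ring. Qed.
Lemma jLwJ (x y : 'cV[C]_4) : jL (wedge x (Jvec y)) = wedge y (Jvec x).
Proof. by v6; ring. Qed.
Lemma w4span1 (c x y : C) (a b w : 'cV[C]_4) : wedge4 (c *: wedge (x *: a + y *: b) w) (wedge a b) = 0.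
Proof. by crunch; ring. Qed.
Lemma w4span2 (c x y : C) (u a b : 'cV[C]_4) : wedge4 (c *: wedge u (x *: a + y *: b)) (wedge a b) = 0.
Proof. by crunch; ring. Qed.
End S2.

Section S3.
Variable C : numClosedFieldType.
Lemma expand6 (a b c d : 'cV[C]_4) (al : 'cV[C]_6) :
  wedge4 (wedge a b) (wedge c d) *: al =
  wedge4 al (wedge c d) *: wedge a b - wedge4 al (wedge b d) *: wedge a c
  + wedge4 al (wedge b c) *: wedge a d + wedge4 al (wedge a d) *: wedge b c
  - wedge4 al (wedge a c) *: wedge b d + wedge4 al (wedge a b) *: wedge c d.
Proof. by v6; ring. Qed.
Lemma quad6 (a b c d : 'cV[C]_4) (al : 'cV[C]_6) :
  wedge4 (wedge a b) (wedge c d) * wedge4 al al =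
  2 * (wedge4 al (wedge c d) * wedge4 al (wedge a b) - wedge4 al (wedge b d) * wedge4 al (wedge a c)
      + wedge4 al (wedge b c) * wedge4 al (wedge a d)).
Proof. by crunch; ring. Qed.
Lemma spanw (a b c d : 'cV[C]_4) (x1 y1 z1 w1 x2 y2 z2 w2 : C) :
  wedge4 (wedge a b) (wedge (x1 *: a + y1 *: b + z1 *: c + w1 *: d) (x2 *: a + y2 *: b + z2 *: c + w2 *: d))
  = (z1 * w2 - w1 * z2) * wedge4 (wedge a b) (wedge c d).
Proof. by crunch; ring. Qed.
Lemma wbil (a b c d : 'cV[C]_4) (t t' : C) :
  wedge (a + t *: b) (c + t' *: d) = wedge a c + t' *: wedge a d + t *: wedge b c + (t * t') *: wedge b d.
Proof. by v6; ring. Qed.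
End S3.

Section S4.
Variable C : numClosedFieldType.

Lemma wedge_nz (v : 'cV[C]_4) : v != 0 -> wedge v (Jvec v) != 0.
Proof.
move=> hv; apply/eqP => h; move/eqP: hv; apply.
have h0 := congr1 (fun x : 'cV[C]_6 => x (inord 0) 0) h.
have h5 := congr1 (fun x : 'cV[C]_6 => x (inord 5) 0) h.
move: h0 h5; rewrite /= !zeroE wE0 wE5 JE0 JE1 JE2 JE3 => h0 h5.
have e0 : v (inord 0) 0 * (v (inord 0) 0)^* + v (inord 1) 0 * (v (inord 1) 0)^* = 0.
  by rewrite -h0; ring.
have e5 : v (inord 2) 0 * (v (inord 2) 0)^* + v (inord 3) 0 * (v (inord 3) 0)^* = 0.
  by rewrite -h5; ring.
move/eqP: e0; rewrite paddr_eq0 ?mul_conjC_ge0 // !mul_conjC_eq0 => /andP[/eqP z0 /eqP z1].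
move/eqP: e5; rewrite paddr_eq0 ?mul_conjC_ge0 // !mul_conjC_eq0 => /andP[/eqP z2 /eqP z3].
by apply: cV4P; rewrite zeroE.
Qed.

Definition e4v (x0 x1 x2 x3 : C) : 'cV[C]_4 := \col_(i < 4) (nth 0 [:: x0; x1; x2; x3] i).
Lemma e4v0 (x0 x1 x2 x3 : C) : e4v x0 x1 x2 x3 (inord 0) 0 = x0.
Proof. by rewrite !mxE !inordK. Qed.
Lemma e4v1 (x0 x1 x2 x3 : C) : e4v x0 x1 x2 x3 (inord 1) 0 = x1.
Proof. by rewrite !mxE !inordK. Qed.
Lemma e4v2 (x0 x1 x2 x3 : C) : e4v x0 x1 x2 x3 (inord 2) 0 = x2.
Proof. by rewrite !mxE !inordK. Qed.
Lemma e4v3 (x0 x1 x2 x3 : C) : e4v x0 x1 x2 x3 (inord 3) 0 = x3.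
Proof. by rewrite !mxE !inordK. Qed.
Lemma nat2 : (2%R : nat) = 2%N. Proof. by []. Qed.
Lemma nat3 : (3%R : nat) = 3%N. Proof. by []. Qed.
Lemma nat4 : (4%R : nat) = 4%N. Proof. by []. Qed.
Lemma nat5 : (5%R : nat) = 5%N. Proof. by []. Qed.
Ltac ee := rewrite ?e4v0 ?e4v1 ?e4v2 ?e4v3 ?nat2 ?nat3 ?nat4 ?nat5.

Lemma extract (P : 'cV[C]_6) : (forall v w, wedge4 P (wedge v w) = 0) -> P = 0.
Proof.
move=> h; apply: cV6P; rewrite !zeroE.
- have E : P (inord 0) 0 = 1 * wedge4 P (wedge (e4v 0 0 1 0) (e4v 0 0 0 1)) by crunch; ee; ring.
  by rewrite E h mulr0.
- have E : P (inord 1) 0 = -1 * wedge4 P (wedge (e4v 0 1 0 0) (e4v 0 0 0 1)) by crunch; ee; ring.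
  by rewrite E h mulr0.
- have E : P (inord 2) 0 = 1 * wedge4 P (wedge (e4v 0 1 0 0) (e4v 0 0 1 0)) by crunch; ee; ring.
  by rewrite E h mulr0.
- have E : P (inord 3) 0 = 1 * wedge4 P (wedge (e4v 1 0 0 0) (e4v 0 0 0 1)) by crunch; ee; ring.
  by rewrite E h mulr0.
- have E : P (inord 4) 0 = -1 * wedge4 P (wedge (e4v 1 0 0 0) (e4v 0 0 1 0)) by crunch; ee; ring.
  by rewrite E h mulr0.
- have E : P (inord 5) 0 = 1 * wedge4 P (wedge (e4v 1 0 0 0) (e4v 0 1 0 0)) by crunch; ee; ring.
  by rewrite E h mulr0.
Qed.

Lemma w0 (w : 'cV[C]_4) : wedge 0 w = 0.
Proof. by v6; ring. Qed.
Lemma wanti (v w : 'cV[C]_4) : wedge w (- v) = wedge v w.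
Proof. by v6; ring. Qed.
Lemma wcomb (v w : 'cV[C]_4) (al be al' be' : C) :
  wedge (al *: v + be *: w) (al' *: w + be' *: v) = (al * al' - be * be') *: wedge v w.
Proof. by v6; ring. Qed.
Lemma w4selfZ (c : C) (v w : 'cV[C]_4) : wedge4 (c *: wedge v w) (c *: wedge v w) = 0.
Proof. by crunch; ring. Qed.
End S4.

Set Default Proof Using "All".
Section S5.
Variable C : numClosedFieldType.
Variables (T : 'M[C]_4) (a b : 'cV[C]_4).
Hypothesis hTJ : forall v, T *m Jvec v = Jvec (T *m v).
Hypothesis hTT : T *m T = -1.
Hypothesis ha : T *m a = 'i *: a.
Hypothesis hb : T *m b = 'i *: b.
Hypothesis hab : wedge a b != 0.
Hypothesis hS : forall v, T *m v = 'i *: v -> exists x y : C, v = x *: a + y *: b.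

Lemma cVl (x : C) : (x^-1)^* = (x^*)^-1. Proof. exact: fmorphV. Qed.

Lemma TTv (v : 'cV[C]_4) : T *m (T *m v) = - v.
Proof. by rewrite mulmxA hTT mulNmx mul1mx. Qed.

Lemma TJm (v : 'cV[C]_4) : T *m v = - 'i *: v -> T *m Jvec v = 'i *: Jvec v.
Proof. by move=> h; rewrite hTJ h JvecZ cN conjCi opprK. Qed.
Lemma TJp (v : 'cV[C]_4) : T *m v = 'i *: v -> T *m Jvec v = - 'i *: Jvec v.
Proof. by move=> h; rewrite hTJ h JvecZ conjCi. Qed.

Lemma two0 : (2 : C) != 0.
Proof. by rewrite pnatr_eq0. Qed.

Lemma spanning (v : 'cV[C]_4) : exists x y z w : C,
  v = x *: a + y *: b + z *: Jvec a + w *: Jvec b.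
Proof.
set vp := v - 'i *: (T *m v).
set vm := v + 'i *: (T *m v).
have hi : 'i * 'i = -1 :> C by exact: mulCii.
have hvp : T *m vp = 'i *: vp.
  rewrite /vp mulmxBr -scalemxAr TTv. v4. ring: hi. ring: hi. ring: hi. ring: hi.
have hvm : T *m vm = - 'i *: vm.
  rewrite /vm mulmxDr -scalemxAr TTv. v4. ring: hi. ring: hi. ring: hi. ring: hi.
have [x [y ex]] := hS _ hvp.
have [x' [y' ex']] := hS _ (TJm _ hvm).
have em : vm = - (x'^* *: Jvec a + y'^* *: Jvec b).
  by rewrite -!JvecZ -JvecD -ex' JJ opprK.
have h2 := two0.
exists (x / 2), (y / 2), (- x'^* / 2), (- y'^* / 2).
have : 2 *: v = vp + vm by rewrite /vp /vm; v4; ring.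
rewrite ex em => e2.
have -> : v = 2^-1 *: (2 *: v) by rewrite scalerA mulVf // scale1r.
by rewrite e2; v4; field.
Qed.

Lemma Dnz : wedge4 (wedge a b) (wedge (Jvec a) (Jvec b)) != 0.
Proof.
apply/eqP => D0; move/eqP: hab; apply; apply: extract => v w.
have [x1 [y1 [z1 [w1 ->]]]] := spanning v.
have [x2 [y2 [z2 [w2 ->]]]] := spanning w.
by rewrite spanw D0 mulr0.
Qed.

Lemma back3 (u : 'cV[C]_4) (al : 'cV[C]_6) : u != 0 -> T *m u = 'i *: u ->
  proj_eq (wedge u (Jvec u)) al ->
  inQ2S (wedge a b) (wedge (Jvec a) (Jvec b)) al /\ proj_eq al (jL al).
Proof.
move=> hu0 hu [c [hc ->]].
have [x [y exy]] := hS _ hu.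
split; first split.
- by rewrite scaler_eq0 negb_or hc wedge_nz.
split; first exact: w4selfZ.
split; first by rewrite {1}exy w4span1.
  by rewrite exy JvecD !JvecZ w4span2.
exists (c^* / c); split.
  by rewrite mulf_neq0 ?conjC_eq0 ?invr_eq0.
by rewrite jLZ jL_wedge JJ wanti scalerA divfK.
Qed.

Lemma Jvec0 : Jvec (0 : 'cV[C]_4) = 0.
Proof. by v4; ring. Qed.

Lemma eig_fix (u : 'cV[C]_4) : T *m u = 'i *: u -> fixes_hline T u.
Proof.
move=> hu; have hJu := TJp _ hu.
have hi : 'i * 'i = -1 :> C by exact: mulCii.
move=> w; split.
- case=> [z [w' ->]].
  exists ((- 'i * z) *: u + ('i * w') *: Jvec u); split; first by exists (- 'i * z), ('i * w').
  rewrite mulmxDr -!scalemxAr hu hJu; v4; ring: hi.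
- case=> u0 [[z [w' ->]] ->]. exists ('i * z), (- 'i * w').
  rewrite mulmxDr -!scalemxAr hu hJu; v4; ring: hi.
Qed.

Lemma fix_eig (v : 'cV[C]_4) : v != 0 -> fixes_hline T v -> exists u, u != 0 /\ T *m u = 'i *: u /\
  exists k, k != 0 /\ wedge v (Jvec v) = k *: wedge u (Jvec u).
Proof.
move=> hv hf.
have hi : 'i * 'i = -1 :> C by exact: mulCii.
have [z [w hTv]] : inH v (T *m v).
  apply/(hf (T *m v)).2; exists v; split => //; exists 1, 0.
  by rewrite scale1r scale0r addr0.
set vp := v - 'i *: (T *m v).
have hvp : T *m vp = 'i *: vp.
  rewrite /vp mulmxBr -scalemxAr TTv. v4. ring: hi. ring: hi. ring: hi. ring: hi.
have evp : vp = (1 - 'i * z) *: v + (- ('i * w)) *: Jvec v by rewrite /vp hTv; v4; ring.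
have [vp0|vpn0] := eqVneq vp 0.
- have hTv' : T *m v = - 'i *: v.
    have -> : - 'i *: v = - 'i *: (v - 'i *: (T *m v)) + T *m v by v4; ring: hi.
    by rewrite -/vp vp0 scaler0 add0r.
  exists (Jvec v); split.
    apply: contraNneq hv => J0; have := @JJ C v; rewrite J0 Jvec0 => /eqP.
    by rewrite eq_sym oppr_eq0.
  split; first exact: TJm _ hTv'.
  exists 1; split; first exact: oner_neq0.
  by rewrite scale1r JJ wanti.
- exists vp; split => //; split => //.
  move: evp; set al := 1 - 'i * z; set be := - ('i * w) => evp.
  have hk : al * al^* + be * be^* != 0.
    apply: contraNneq vpn0 => /eqP h0.
    move: h0; rewrite paddr_eq0 ?mul_conjC_ge0 // !mul_conjC_eq0 => /andP[/eqP z0 /eqP z1].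
    by rewrite evp z0 z1 !scale0r addr0.
  exists (al * al^* + be * be^*)^-1; split; first by rewrite invr_eq0.
  rewrite evp JvecD !JvecZ JJ scalerN -scaleNr wcomb scalerA mulrN opprK mulVf //.
  by rewrite scale1r.
Qed.

Lemma fwd3 (al : 'cV[C]_6) : inQ2S (wedge a b) (wedge (Jvec a) (Jvec b)) al -> proj_eq al (jL al) ->
  exists u, u != 0 /\ T *m u = 'i *: u /\ proj_eq (wedge u (Jvec u)) al.
Proof.
move=> [hal0 [hq [h1 h2]]] [c [hc hjl]].
have hD := Dnz.
have E : wedge4 (wedge a b) (wedge (Jvec a) (Jvec b)) *: al =
   (- wedge4 al (wedge b (Jvec b))) *: wedge a (Jvec a) + wedge4 al (wedge b (Jvec a)) *: wedge a (Jvec b)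
   + wedge4 al (wedge a (Jvec b)) *: wedge b (Jvec a) + (- wedge4 al (wedge a (Jvec a))) *: wedge b (Jvec b).
  by rewrite expand6 h1 h2 !scale0r add0r addr0 !scaleNr.
have Q : wedge4 al (wedge b (Jvec a)) * wedge4 al (wedge a (Jvec b)) =
         wedge4 al (wedge b (Jvec b)) * wedge4 al (wedge a (Jvec a)).
  have := @quad6 C a b (Jvec a) (Jvec b) al; rewrite hq h1 h2 mulr0 => /esym/eqP.
  rewrite mulf_eq0 (negbTE two0) /= => /eqP H.
  by apply/eqP; rewrite -subr_eq0; apply/eqP; rewrite -H; ring.
have R X : (wedge4 al X)^* = c * wedge4 al (jL X) by rewrite -w4jL hjl w4Z.
have Ra := R (wedge a (Jvec a)); rewrite jLwJ in Ra.
have Rb := R (wedge b (Jvec b)); rewrite jLwJ in Rb.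
have Rg := R (wedge b (Jvec a)); rewrite jLwJ in Rg.
have Rd := R (wedge a (Jvec b)); rewrite jLwJ in Rd.
move: E Q Ra Rb Rg Rd.
set D := wedge4 (wedge a b) (wedge (Jvec a) (Jvec b)).
set p := wedge4 al (wedge a (Jvec a)).
set q := wedge4 al (wedge b (Jvec b)).
set g := wedge4 al (wedge b (Jvec a)).
set d := wedge4 al (wedge a (Jvec b)).
move=> E Q Ra Rb Rg Rd.
suff [u [K [hu E']]] : exists u K, T *m u = 'i *: u /\ D *: al = K *: wedge u (Jvec u).
  have hDal : D *: al != 0 by rewrite scaler_eq0 negb_or hD hal0.
  exists u; split.
    by apply: contraNneq hDal => u0; rewrite E' u0 w0 scaler0.
  split => //; exists (D^-1 * K); split.
    rewrite mulf_neq0 ?invr_eq0 //; apply: contraNneq hDal => K0.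
    by rewrite E' K0 scale0r.
  by rewrite -scalerA -E' scalerA mulVf // scale1r.
have [q0|qn0] := eqVneq q 0.
- have gd0 : g * d = 0 by rewrite Q q0 mul0r.
  have [g0 d0] : g = 0 /\ d = 0.
    move/eqP: gd0; rewrite mulf_eq0 => /orP[/eqP g0|/eqP d0].
      split => //; move: Rg; rewrite g0 c0 => /esym/eqP.
      by rewrite mulf_eq0 (negbTE hc) /= => /eqP.
    split => //; move: Rd; rewrite d0 c0 => /esym/eqP.
    by rewrite mulf_eq0 (negbTE hc) /= => /eqP.
  exists b, (- p); split => //.
  by rewrite E q0 g0 d0 oppr0 !scale0r !add0r.
- pose t := - d / q.
  have tc : t^* = - g / q.
    rewrite /t cM cN cVl Rd Rb; field.
    by rewrite qn0 hc.
  exists (a + t *: b), (- q); split.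
    by rewrite mulmxDr -scalemxAr ha hb; v4; ring.
  rewrite JvecD JvecZ wbil E !scalerDr !scalerA.
  have e1 : - q * t^* = g by rewrite tc; field.
  have e2 : - q * t = d by rewrite /t; field.
  have hp : p = g * d / q by rewrite Q [q * _]mulrC mulfK.
  have e3 : - q * (t * t^*) = - p by rewrite tc hp /t; field.
  by rewrite e1 e2 e3.
Qed.
End S5.


Lemma jL0 (C : numClosedFieldType) : jL (0 : 'cV[C]_6) = 0.
Proof. by v6; ring. Qed.
Lemma wNN (C : numClosedFieldType) (x y : 'cV[C]_4) : wedge (- x) (- y) = wedge x y.
Proof. by v6; ring. Qed.

Theorem mainTheorem18 (C : numClosedFieldType) (T : 'M[C]_4) (a b : 'cV[C]_4) :
  (* T in End_H(H^2): C-linear and commuting with right multiplication by j *)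
  (forall v, T *m Jvec v = Jvec (T *m v)) ->
  T *m T = -1 ->
  (* a, b is a basis of {v : T v = v i}, whose projectivization is the twistor lift S *)
  T *m a = 'i *: a -> T *m b = 'i *: b -> wedge a b != 0 ->
  (forall v, T *m v = 'i *: v -> exists x y : C, v = x *: a + y *: b) ->
  (* [S] = [a /\ b], [Sj] = [aj /\ bj] *)
  let Q2 := inQ2S (wedge a b) (wedge (Jvec a) (Jvec b)) in
  (* j restricts to a real structure on Q^2_S *)
  (forall al, Q2 al -> Q2 (jL al) /\ jL (jL al) = al) /\
  (* its real set is the image of S = {vH : T(vH) = vH} under vH |-> [v /\ vj] *)
  (forall al, (Q2 al /\ proj_eq al (jL al)) <->
     exists v, v != 0 /\ fixes_hline T v /\ proj_eq (wedge v (Jvec v)) al) /\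
  (* equivalently, the points [a /\ aj] with [a] on the twistor lift S *)
  (forall al, (Q2 al /\ proj_eq al (jL al)) <->
     exists v, v != 0 /\ T *m v = 'i *: v /\ proj_eq (wedge v (Jvec v)) al).
Proof.
move=> hTJ hTT ha hb hab hS Q2.
have F3 := @fwd3 C T a b hTJ hTT ha hb hab hS.
have B3 := @back3 C T a b hTJ hTT ha hb hab hS.
have FE := @fix_eig C T a b hTJ hTT ha hb hab hS.
have EF := @eig_fix C T a b hTJ hTT ha hb hab hS.
split.
  move=> al; rewrite /Q2 /inQ2S => -[hal0 [hq [h1 h2]]]; rewrite jLjL; split => //.
  split.
    apply: contraNneq hal0 => h0; by rewrite -[al]jLjL h0 jL0.
  split; first by rewrite w4jL hq c0.
  split.
    have -> : wedge a b = jL (wedge (Jvec a) (Jvec b)) by rewrite jL_wedge !JJ wNN.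
    by rewrite w4jL h2 c0.
  by rewrite -jL_wedge w4jL h1 c0.
split.
  move=> al; split.
    case=> hQ hR; have [u [hu0 [hu hp]]] := F3 al hQ hR.
    by exists u; split; [done | split; [exact: EF | done]].
  case=> v [hv0 [hf [c [hc ->]]]].
  have [u [hu0 [hu [k [hk ek]]]]] := FE v hv0 hf.
  apply: (B3 _ _ hu0 hu); exists (c * k); split; first by rewrite mulf_neq0.
  by rewrite ek scalerA.
move=> al; split.
  by case=> hQ hR; exact: F3 al hQ hR.
by case=> u [hu0 [hu hp]]; exact: B3 _ _ hu0 hu hp.
Qed.
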